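(* Let $\Omega$ be a nonempty set, let $\mathcal A$ be an algebra of subsets of $\Omega$, and let $\mathcal X_{\mathcal A}$ denote the set of bounded functions $X:\Omega\to\mathbb R$ that are measurable with respect to $\mathcal A$ (i.e. $\{X>x\}\in\mathcal A$ and $\{X\ge x\}\in\mathcal A$ for all $x\in\mathbb R$). For a mapping $\mathcal R:\mathcal X_{\mathcal A}\to\mathbb R$ the following are equivalent: (i) $\mathcal R$ satisfies ordinality, i.e. $\mathcal R(\phi\circ X)=\phi(\mathcal R(X))$ for all $X\in\mathcal X_{\mathcal A}$ and all increasing (non-strictly) continuous functions $\phi:\mathbb R\to\mathbb R$; (ii) $\mathcal R$ is a Choquet quantile, i.e. there exists a binary capacity $v$ on $\mathcal A$ such that $\mathcal R(X)=\int X\,\mathrm d v$ for all $X\in\mathcal X_{\mathcal A}$.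
   Context: A capacity on $\mathcal A$ is a function $w:\mathcal A\to\mathbb R$ that is increasing ($w(A)\le w(B)$ whenever $A\subseteq B$) with $w(\varnothing)=0$ and $w(\Omega)=1$; it is binary if it takes values only in $\{0,1\}$. For a capacity $w$ and bounded measurable $X$, the Choquet integral is $\int X\,\mathrm dw=\int_{-\infty}^0 (w(X\ge x)-1)\,\mathrm dx+\int_0^\infty w(X\ge x)\,\mathrm dx$. *)

(* Defs.v *)
From HB Require Import structures.
From mathcomp Require Import all_boot all_order all_algebra.
From mathcomp Require Import all_classical all_reals all_analysis.
Set Implicit Arguments. Unset Strict Implicit. Unset Printing Implicit Defensive.
Import Order.TTheory GRing.Theory Num.Theory numFieldNormedType.Exports.
Local Open Scope classical_set_scope.
Local Open Scope ring_scope.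

Definition is_algebra (Omega : Type) (A : set (set Omega)) : Prop :=
  [/\ A set0,
      (forall B, A B -> A (~` B)) &
      (forall B C, A B -> A C -> A (B `|` C))].

Definition XA (R : realType) (Omega : Type) (A : set (set Omega))
  (X : Omega -> R) : Prop :=
  (exists M : R, forall o, `|X o| <= M) /\
  (forall x : R, A [set o | x < X o] /\ A [set o | x <= X o]).

(* A capacity on A (a set function, only its values on A matter). *)
Definition capacity (R : realType) (Omega : Type) (A : set (set Omega))
  (w : set Omega -> R) : Prop :=
  [/\ (forall B C, A B -> A C -> B `<=` C -> w B <= w C),
      w set0 = 0 & w setT = 1].

Definition binary_capacity (R : realType) (Omega : Type)
  (A : set (set Omega)) (w : set Omega -> R) : Prop :=
  capacity A w /\ (forall B, A B -> w B = 0 \/ w B = 1).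

Definition choquet (R : realType) (Omega : Type) (w : set Omega -> R)
  (X : Omega -> R) : \bar R :=
  (\int[@lebesgue_measure R]_(x in `]-oo, 0%R[) ((w [set o | x <= X o] - 1)%:E)
   + \int[@lebesgue_measure R]_(x in `[0%R, +oo[) ((w [set o | x <= X o])%:E))%E.

Definition ordinality (R : realType) (Omega : Type) (A : set (set Omega))
  (Rm : (Omega -> R) -> R) : Prop :=
  forall (X : Omega -> R) (phi : R -> R),
    XA A X -> {homo phi : x y / x <= y} -> continuous phi ->
    Rm (phi \o X) = phi (Rm X).

(* Main.v *)
Require Import Defs.
From HB Require Import structures.
From mathcomp Require Import all_boot all_order all_algebra.
From mathcomp Require Import all_classical all_reals all_analysis.
From mathcomp Require Import lra.
Set Implicit Arguments. Unset Strict Implicit. Unset Printing Implicit Defensive.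
Import Order.TTheory GRing.Theory Num.Theory numFieldNormedType.Exports.
Local Open Scope classical_set_scope.
Local Open Scope ring_scope.

Lemma cut_lemma (R : realType) (L : set R) (b u : R) :
  (forall x y, x <= y -> L y -> L x) -> L b -> (forall y, L y -> y <= u) ->
  exists t, (forall x, x < t -> L x) /\ (forall x, t < x -> ~ L x).
Proof.
move=> Ldown Lb Lu.
have hs : has_sup L by split; [exists b | exists u => y /Lu].
exists (sup L); split.
- move=> x xt.
  have e0 : 0 < sup L - x by rewrite subr_gt0.
  have [e Le He] := sup_adherent e0 hs.
  apply: (Ldown x e) => //; apply/ltW; move: He; rewrite opprB addrCA subrr addr0.
  by [].
- move=> x tx Lx; have := sup_upper_bound hs Lx.
  by rewrite leNgt tx.
Qed.

Section Alg.
Variables (R : realType) (Omega : Type) (A : set (set Omega)).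
Hypothesis hA : is_algebra A.

Lemma alg0 : A set0. Proof. by case: hA. Qed.
Lemma algT : A setT. Proof. by case: hA => h0 hC _; rewrite -setC0; apply: hC. Qed.
Lemma algC B : A B -> A (~` B). Proof. by case: hA => _ hC _; apply: hC. Qed.
Lemma algU B C : A B -> A C -> A (B `|` C). Proof. by case: hA => _ _ hU; apply: hU. Qed.
Lemma algI B C : A B -> A C -> A (B `&` C).
Proof.
move=> hB hC; rewrite -[B]setCK -[C]setCK -setCU.
by apply: algC; apply: algU; apply: algC.
Qed.

Lemma up_preimage (X : Omega -> R) (U : set R) : XA A X ->
  (forall x y, x <= y -> U x -> U y) -> A [set o | U (X o)].
Proof.
move=> [_ hX] Uup.
have [[b nUb]|allU] := pselect (exists b, ~ U b); last first.
  suff -> : [set o | U (X o)] = setT by apply: algT.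
  apply/seteqP; split => // o _ /=; apply: contrapT => nU; apply: allU; by exists (X o).
have [[u Uu]|noU] := pselect (exists u, U u); last first.
  suff -> : [set o | U (X o)] = set0 by apply: alg0.
  apply/seteqP; split => // o /= Uo; apply: noU; by exists (X o).
have H1 : forall x y, x <= y -> (~` U) y -> (~` U) x.
  move=> x y xy nUy Ux; apply: nUy; exact: Uup Ux.
have H3 : forall y, (~` U) y -> y <= u.
  move=> y nUy; rewrite leNgt; apply/negP => uy; apply: nUy; apply: Uup Uu; exact: ltW.
have [t [Ht1 Ht2]] := cut_lemma H1 nUb H3.
have [Ut|nUt] := pselect (U t).
  suff -> : [set o | U (X o)] = [set o | t <= X o] by case: (hX t).
  apply/seteqP; split => o /=.
  + move=> Uo; rewrite leNgt; apply/negP => /Ht1; by apply.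
  + move=> to; exact: Uup Ut.
suff -> : [set o | U (X o)] = [set o | t < X o] by case: (hX t).
apply/seteqP; split => o /=.
+ move=> Uo; rewrite ltNge le_eqVlt; apply/negP => /orP[/eqP E|/Ht1 //].
  by apply: nUt; rewrite -E.
+ move=> to; apply: contrapT; exact: Ht2.
Qed.

Lemma XA_comp (X : Omega -> R) (g : R -> R) : XA A X ->
  {homo g : x y / x <= y} -> XA A (g \o X).
Proof.
move=> hX gh; split.
  case: hX => [[M HM] _]; exists (`|g (- M)| + `|g M|) => o /=.
  have := HM o; rewrite ler_norml => /andP[h1 h2].
  have a := gh _ _ h1; have b := gh _ _ h2.
  have n1 := ler_norm (g M); have n2 := ler_norm (- g (- M)); rewrite normrN in n2.
  have n3 := normr_ge0 (g M); have n4 := normr_ge0 (g (- M)).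
  rewrite ler_norml; apply/andP; split; lra.
move=> x; split.
- exact: (up_preimage (U := fun y => x < g y)) hX (fun a b ab h => lt_le_trans h (gh _ _ ab)).
- exact: (up_preimage (U := fun y => x <= g y)) hX (fun a b ab h => le_trans h (gh _ _ ab)).
Qed.
End Alg.

Section Int.
Variable R : realType.
Local Notation mu := (@lebesgue_measure R).

Lemma int_pt (D : set R) (t : R) (F G : R -> R) : measurable D ->
  measurable_fun setT G -> (forall x, x != t -> F x = G x) ->
  (\int[mu]_(x in D) (F x)%:E = \int[mu]_(x in D) (G x)%:E)%E.
Proof.
move=> mD mG FG.
have mDt : measurable (D `\ t) by apply: measurableD.
have mGt : measurable_fun (D `\ t) G by apply: measurable_funS mG.
rewrite -(integral_setD1 (r:=t)) //; last first.
  apply/measurable_realfun.measurable_EFinP; apply: eq_measurable_fun mGt => x.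
  by rewrite inE => -[_ /eqP xt]; rewrite FG.
rewrite -[RHS](integral_setD1 (r:=t)) //; last exact/measurable_realfun.measurable_EFinP.
apply: eq_integral => x; rewrite inE => -[_ /eqP xt]; by rewrite FG.
Qed.

Lemma choquet_thr (f : R -> R) (t : R) :
  (forall x, x < t -> f x = 1) -> (forall x, t < x -> f x = 0) ->
  (\int[mu]_(x in `]-oo, 0%R[) ((f x - 1)%:E)
   + \int[mu]_(x in `[0%R, +oo[) ((f x)%:E) = t%:E)%E.
Proof.
move=> f1 f0.
set G : R -> R := \1_(`]-oo, t[).
have mG : measurable_fun setT G by apply: measurable_realfun.measurable_indic.
have FG : forall x, x != t -> f x = G x.
  move=> x xt; rewrite /G indicE mem_setE in_itv /=.
  case: ltgtP xt => // h _; [by rewrite f1 | by rewrite f0].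
have FG1 : forall x, x != t -> f x - 1 = G x - 1 by move=> x /FG ->.
have mG1 : measurable_fun setT (fun x => G x - 1).
  by apply: measurable_realfun.measurable_funB => //; apply: measurable_cst.
rewrite (int_pt _ mG1 FG1) // (int_pt _ mG FG) //.
have [t0|t0] := leP 0 t.
- rewrite (eq_integral (fun _ => 0%E)); last first.
    move=> x; rewrite inE /= in_itv /= => x0.
    by rewrite /G indicE mem_setE in_itv /= (lt_le_trans x0 t0) subrr.
  rewrite integral0 add0e integral_indic //=.
  rewrite (_ : `]-oo, t[ `&` `[0, +oo[ = `[0%R, t[%classic); last first.
    apply/seteqP; split => x /=; rewrite !in_itv /= ?andbT.
      by move=> [-> ->].
    by move=> /andP[-> ->].
  rewrite lebesgue_measure_itv /= lte_fin.
  case: ltP => h; first by rewrite oppr0 adde0.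
  by have -> : t = 0 by apply/eqP; rewrite eq_le t0 h.
- rewrite [X in (_ + X)%E](eq_integral (fun _ => 0%E)); last first.
    move=> x; rewrite inE /= in_itv /= andbT => x0.
    by rewrite /G indicE mem_setE in_itv /= ltNge (ltW (lt_le_trans t0 x0)).
  rewrite integral0 adde0.
  transitivity (\int[mu]_(x in `]-oo, 0%R[) (- (\1_(`[t, +oo[) x : R)%:E))%E.
    apply: eq_integral => x _; rewrite /G !indicE !mem_setE !in_itv /= andbT.
    by case: ltP => _ /=; rewrite ?subrr ?oppr0 // sub0r.
  rewrite integral_ge0N; last by move=> x _; rewrite lee_fin indicE.
  rewrite integral_indic //=.
  rewrite (_ : `[t, +oo[ `&` `]-oo, 0%R[ = `[t, 0%R[%classic); last first.
    apply/seteqP; split => x /=; rewrite !in_itv /= ?andbT.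
      by move=> [-> ->].
    by move=> /andP[-> ->].
  rewrite lebesgue_measure_itv /= lte_fin t0 /=.
  by rewrite add0r opprK.
Qed.
End Int.

Section Fun.
Variable R : realType.
Definition cl (c z : R) : R := Num.min (Num.max (z - c) 0) 1.
Definition dbl (z : R) : R := Num.min (Num.max (z + z) 0) 1.
Definition psi0 (x z : R) : R := Num.max (Num.min z x) (z - 1).

Lemma contB (c : R) : continuous (fun z : R => z - c).
Proof. by move=> z; apply: cvgB; [exact: cvg_id | exact: cvg_cst]. Qed.

Lemma cl_cont c : continuous (cl c).
Proof.
move=> z; apply: (@continuous_min _ _ (fun z => Num.max (z - c) 0) (fun=> 1)).
  apply: (@max_fun_continuous _ _ _ (fun z => z - c) (fun=> 0)).
    exact: contB.
  exact: cst_continuous.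
exact: cst_continuous.
Qed.

Lemma dbl_cont : continuous dbl.
Proof.
apply: (@min_fun_continuous _ _ _ (fun z : R => Num.max (z + z) 0) (fun=> 1)).
  apply: (@max_fun_continuous _ _ _ (fun z : R => z + z) (fun=> 0)).
    by move=> z; apply: cvgD; exact: cvg_id.
  exact: cst_continuous.
exact: cst_continuous.
Qed.

Lemma psi0_cont x : continuous (psi0 x).
Proof.
apply: (@max_fun_continuous _ _ _ (fun z : R => Num.min z x) (fun z : R => z - 1)).
  apply: (@min_fun_continuous _ _ _ id (fun=> x)).
    by move=> z; exact: cvg_id.
  exact: cst_continuous.
exact: contB.
Qed.

Lemma cl_le c c' z z' : c' <= c -> z <= z' -> cl c z <= cl c' z'.
Proof.
move=> cc zz; rewrite /cl; apply: le_min2 => //; apply: le_max2 => //.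
by apply: lerB.
Qed.

Lemma cl_homo c : {homo cl c : x y / x <= y}.
Proof. by move=> x y; apply: cl_le. Qed.

Lemma dbl_homo : {homo dbl : x y / x <= y}.
Proof.
move=> a b ab; rewrite /dbl; apply: le_min2 => //; apply: le_max2 => //.
by apply: lerD.
Qed.

Lemma psi0_homo x : {homo psi0 x : a b / a <= b}.
Proof.
move=> a b ab; rewrite /psi0; apply: le_max2; first by apply: le_min2.
by apply: lerB.
Qed.

Lemma cont_lt (phi : R -> R) t y : continuous phi -> y < phi t ->
  exists a, a < t /\ y < phi a.
Proof.
move=> hphi hy.
have H : \forall a \near t, y < phi a := cvgr_gt (phi t) (hphi t) _ hy.
have [e e0 He] := (nbhs_ballP _ _).1 (H _).
exists (t - e / 2); split.
  by rewrite ltrBlDr ltrDl divr_gt0 //; exact: e0.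
apply: He; rewrite /ball /=.
have e1 : 0 < e := e0.
rewrite opprB addrC subrK ger0_norm; lra.
Qed.

Lemma cont_gt (phi : R -> R) t y : continuous phi -> phi t < y ->
  exists a, t < a /\ phi a < y.
Proof.
move=> hphi hy.
have H : \forall a \near t, phi a < y := cvgr_lt (phi t) (hphi t) _ hy.
have [e e0 He] := (nbhs_ballP _ _).1 (H _).
have e1 : 0 < e := e0.
exists (t + e / 2); split; first lra.
apply: He; rewrite /ball /=.
rewrite opprD addrA subrr sub0r normrN ger0_norm; lra.
Qed.
End Fun.

Section Main.
Variables (R : realType) (Omega : Type) (A : set (set Omega)).
Hypothesis hA : is_algebra A.

Lemma cl_1 (c z : R) : 1 <= z - c -> cl c z = 1.
Proof.
move=> h; rewrite /cl max_l; last by apply: le_trans h.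
by rewrite min_r.
Qed.

Lemma cl_0 (c z : R) : z - c <= 0 -> cl c z = 0.
Proof. by move=> h; rewrite /cl max_r // min_l. Qed.

Lemma iB (B : set Omega) o : B o -> (\1_B o : R) = 1.
Proof. by move=> h; rewrite indicE mem_set. Qed.
Lemma nB (B : set Omega) o : ~ B o -> (\1_B o : R) = 0.
Proof. by move=> h; rewrite indicE memNset. Qed.

Lemma levelA (P S : set Omega) : A S -> (forall o, P o -> S o) ->
  (forall o, S o -> P o) -> A P.
Proof.
move=> hS h1 h2; suff -> : P = S by [].
by apply/seteqP; split => o; [apply: h1 | apply: h2].
Qed.

Lemma XA_vals (X : Omega -> R) (B C : set Omega) (a b c : R) :
  A B -> A C -> B `<=` C -> a <= b -> b <= c ->
  (forall o, B o -> X o = c) -> (forall o, C o -> ~ B o -> X o = b) ->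
  (forall o, ~ C o -> X o = a) -> XA A X.
Proof.
move=> hB hC BC ab bc Xc Xb Xa.
have HX : forall o, [\/ (B o /\ C o /\ X o = c),
                       (~ B o /\ C o /\ X o = b) | (~ B o /\ ~ C o /\ X o = a)].
  move=> o; have [Bo|nBo] := pselect (B o).
    by apply: Or31; split => //; split; [apply: BC | apply: Xc].
  have [Co|nCo] := pselect (C o).
    by apply: Or32; split => //; split => //; apply: Xb.
  by apply: Or33; split => //; split => //; apply: Xa.
split.
  exists (`|a| + `|b| + `|c|) => o.
  have n1 := normr_ge0 a; have n2 := normr_ge0 b; have n3 := normr_ge0 c.
  by case: (HX o) => [[_ [_ ->]]|[_ [_ ->]]|[_ [_ ->]]]; lra.
move=> x; split.
- have [xa|ax] := ltP x a.
    apply: (levelA (S := setT)); [exact: algT | by [] |].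
    by move=> o _ /=; case: (HX o) => [[_ [_ ->]]|[_ [_ ->]]|[_ [_ ->]]]; lra.
  have [xb|bx] := ltP x b.
    apply: (levelA (S := C)) => // o /=.
      by case: (HX o) => [[_ [? _]]|[_ [? _]]|[_ [_ ->]]] //; lra.
    by case: (HX o) => [[_ [_ ->]]|[_ [_ ->]]|[_ [? _]]] //; lra.
  have [xc|cx] := ltP x c.
    apply: (levelA (S := B)) => // o /=.
      by case: (HX o) => [[? _]|[_ [_ ->]]|[_ [_ ->]]] //; lra.
    by case: (HX o) => [[_ [_ ->]]|[? _]|[? _]] //; lra.
  apply: (levelA (S := set0)); [exact: alg0 | | by []].
  by move=> o /=; case: (HX o) => [[_ [_ ->]]|[_ [_ ->]]|[_ [_ ->]]]; lra.
- have [xa|ax] := leP x a.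
    apply: (levelA (S := setT)); [exact: algT | by [] |].
    by move=> o _ /=; case: (HX o) => [[_ [_ ->]]|[_ [_ ->]]|[_ [_ ->]]]; lra.
  have [xb|bx] := leP x b.
    apply: (levelA (S := C)) => // o /=.
      by case: (HX o) => [[_ [? _]]|[_ [? _]]|[_ [_ ->]]] //; lra.
    by case: (HX o) => [[_ [_ ->]]|[_ [_ ->]]|[_ [? _]]] //; lra.
  have [xc|cx] := leP x c.
    apply: (levelA (S := B)) => // o /=.
      by case: (HX o) => [[? _]|[_ [_ ->]]|[_ [_ ->]]] //; lra.
    by case: (HX o) => [[_ [_ ->]]|[? _]|[? _]] //; lra.
  apply: (levelA (S := set0)); [exact: alg0 | | by []].
  by move=> o /=; case: (HX o) => [[_ [_ ->]]|[_ [_ ->]]|[_ [_ ->]]]; lra.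
Qed.

Lemma XA_indic (B : set Omega) : A B -> XA A (\1_B : Omega -> R).
Proof.
move=> hB; apply: (@XA_vals _ B B 0 1 1) => //.
- by move=> o; apply: iB.
- by move=> o; apply: nB.
Qed.

Section Dir2.
Variable v : set Omega -> R.
Hypothesis hv : binary_capacity A v.

Lemma v_mono B C : A B -> A C -> B `<=` C -> v B <= v C.
Proof. by case: hv => -[h _ _] _; apply: h. Qed.
Lemma v_bin B : A B -> v B = 0 \/ v B = 1.
Proof. by case: hv => _ h; apply: h. Qed.
Lemma v_0 : v set0 = 0. Proof. by case: hv => -[]. Qed.
Lemma v_T : v setT = 1. Proof. by case: hv => -[]. Qed.

Lemma up1 B C : A B -> A C -> B `<=` C -> v B = 1 -> v C = 1.
Proof.
move=> hB hC BC vB; have := v_mono hB hC BC; rewrite vB.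
by case: (v_bin hC) => ->; rewrite ?ler10.
Qed.

Lemma down0 B C : A B -> A C -> B `<=` C -> v C = 0 -> v B = 0.
Proof.
move=> hB hC BC vC; have := v_mono hB hC BC; rewrite vC.
by case: (v_bin hB) => ->; rewrite ?ler10.
Qed.

Lemma thr_v (X : Omega -> R) : XA A X -> exists t,
  (forall x, x < t -> v [set o | x <= X o] = 1) /\
  (forall x, t < x -> v [set o | x <= X o] = 0).
Proof.
move=> hX; have [[M HM] hl] := hX.
pose L := fun x : R => v [set o | x <= X o] = 1.
have Hb : L (- M).
  rewrite /L (_ : [set o | - M <= X o] = setT) ?v_T //.
  apply/seteqP; split => // o _ /=; have := HM o; rewrite ler_norml.
  by case/andP.
have Hu : forall y, L y -> y <= M.
  move=> y; rewrite /L => vy; rewrite leNgt; apply/negP => My; move: vy.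
  rewrite (_ : [set o | y <= X o] = set0) ?v_0; first by move/eqP; rewrite eq_sym oner_eq0.
  apply/seteqP; split => // o /= yo; have := HM o; rewrite ler_norml => /andP[_ h].
  lra.
have Hd : forall x y, x <= y -> L y -> L x.
  move=> x y xy; rewrite /L => vy; apply: up1 vy; [exact: (hl y).2 | exact: (hl x).2 |].
  by move=> o /= yo; apply: le_trans yo.
have [t [t1 t0]] := cut_lemma Hd Hb Hu.
exists t; split => // x tx; have := t0 x tx.
by case: (v_bin (hl x).2).
Qed.

Lemma choquet_v (X : Omega -> R) : XA A X -> exists t,
  choquet v X = t%:E /\
  (forall x, x < t -> v [set o | x <= X o] = 1) /\
  (forall x, t < x -> v [set o | x <= X o] = 0).
Proof.
move=> hX; have [t [t1 t0]] := thr_v hX; exists t; split => //.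
by rewrite /choquet; apply: choquet_thr.
Qed.

Lemma ii_i (Rm : (Omega -> R) -> R) :
  (forall X, XA A X -> (Rm X)%:E = choquet v X) -> ordinality A Rm.
Proof.
move=> hR X phi hX hphi cphi.
have hX' := XA_comp hA hX hphi.
have [t [ct [t1 t0]]] := choquet_v hX.
have Rt : Rm X = t by apply: EFin_inj; rewrite hR.
rewrite Rt; apply: EFin_inj; rewrite hR // /choquet; apply: choquet_thr.
- move=> x xt; have [a [at1 xa]] := cont_lt cphi xt.
  apply: (@up1 [set o | a <= X o]); [exact: (hX.2 a).2 | exact: (hX'.2 x).2 | | exact: t1].
  by move=> o /= ao; apply: ltW; apply: lt_le_trans xa _; apply: hphi.
- move=> x xt; have [a [at1 xa]] := cont_gt cphi xt.
  apply: (@down0 _ [set o | a <= X o]); [exact: (hX'.2 x).2 | exact: (hX.2 a).2 | | exact: t0].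
  move=> o /= xo; rewrite leNgt; apply/negP => oa.
  have := le_trans xo (hphi _ _ (ltW oa)); rewrite leNgt xa.
  by [].
Qed.
End Dir2.

Section Dir1.
Variable Rm : (Omega -> R) -> R.
Hypothesis hord : ordinality A Rm.

Lemma XA_cst (c : R) : XA A (fun _ => c).
Proof.
apply: (@XA_vals _ setT setT c c c) => //; first exact: algT.
exact: algT.
Qed.

Lemma Rm_cst (c : R) : Rm (fun _ => c) = c.
Proof.
have := hord (phi := fun _ => c) (XA_cst 0) (fun _ _ _ => lexx c) (@cst_continuous R R c).
by [].
Qed.

Definition vv (B : set Omega) : R := Rm (\1_B).

Lemma ord_eq (X Y : Omega -> R) phi : XA A X -> {homo phi : x y / x <= y} ->
  continuous phi -> phi \o X = Y -> Rm Y = phi (Rm X).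
Proof. by move=> hX hp cp <-; apply: hord. Qed.

Lemma key (X : Omega -> R) x : XA A X ->
  (x < Rm X -> vv [set o | x <= X o] = 1) /\
  (Rm X < x -> vv [set o | x <= X o] = 0).
Proof.
move=> hX.
pose g := fun y : R => y + (if x <= y then 1 else 0).
have gh : {homo g : a b / a <= b}.
  move=> a b ab; rewrite /g; case: (leP x a) => h1; case: (leP x b) => h2 /=;
    rewrite ?mulr1n ?mulr0n; lra.
have hZ := XA_comp hA hX gh.
set Z := g \o X in hZ.
have E1 : psi0 x \o Z = X.
  apply/funext => o; rewrite /Z /g /psi0 /=.
  case: (leP x (X o)) => h /=; rewrite ?mulr1n ?mulr0n.
    rewrite min_r; last lra.
    by rewrite max_r //; lra.
  rewrite addr0 min_l; last exact: ltW.
  by rewrite max_l //; lra.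
have E2 : cl x \o Z = \1_[set o | x <= X o].
  apply/funext => o; rewrite /Z /g /=.
  case: (leP x (X o)) => h /=; rewrite ?mulr1n ?mulr0n.
    by rewrite iB //= cl_1 //; lra.
  rewrite nB /=; last by move=> /= h'; move: (lt_le_trans h h'); rewrite ltxx.
  by rewrite cl_0 //; lra.
have R1 := ord_eq hZ (@psi0_homo R x) (@psi0_cont R x) E1.
have R2 := ord_eq hZ (@cl_homo R x) (@cl_cont R x) E2.
rewrite /vv R2 R1 /psi0; split.
- rewrite lt_max => /orP[|h].
    by rewrite lt_min ltxx andbF.
  by rewrite cl_1 //; lra.
- rewrite gt_max => /andP[h _]; move: h; rewrite gt_min ltxx orbF => h.
  by rewrite cl_0 //; lra.
Qed.

Lemma i_ii : binary_capacity A vv /\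
  (forall X : Omega -> R, XA A X -> (Rm X)%:E = choquet vv X).
Proof.
have bin : forall B, A B -> vv B = 0 \/ vv B = 1.
  move=> B hB; have hI := XA_indic hB.
  have E1 : @cl R 0 \o \1_B = \1_B.
    apply/funext => o /=; have [Bo|nBo] := pselect (B o).
      by rewrite iB // cl_1 // subr0.
    by rewrite nB // cl_0 // subr0.
  have E2 : @dbl R \o \1_B = \1_B.
    apply/funext => o /=; have [Bo|nBo] := pselect (B o).
      by rewrite iB // /dbl max_l ?min_r //; lra.
    by rewrite nB // /dbl addr0 max_l // min_l //; lra.
  have R1 := ord_eq hI (@cl_homo R 0) (@cl_cont R 0) E1.
  have R2 := ord_eq hI (@dbl_homo R) (@dbl_cont R) E2.
  rewrite /vv; set r := Rm (\1_B) in R1 R2 *.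
  have r0 : 0 <= r.
    rewrite R1 /cl; rewrite le_min ler01 andbT; by rewrite le_max lexx orbT.
  have r1 : r <= 1 by rewrite R1 /cl; by rewrite ge_min lexx orbT.
  move: R2; rewrite /dbl max_l; last lra.
  have [h|h] := leP (r + r) 1.
    by move=> E; left; lra.
  by move=> E; right; lra.
split.
  split => //; split.
  - move=> B C hB hC BC.
    pose X3 := fun o => (\1_B o : R) + \1_C o.
    have hX3 : XA A X3.
      apply: (@XA_vals _ B C 0 1 2) => //; try lra.
      + by move=> o Bo; have Co := BC _ Bo; rewrite /X3 iB // iB //; lra.
      + by move=> o Co nBo; rewrite /X3 nB // iB //; lra.
      + move=> o nCo; have nBo : ~ B o by move=> /BC.
        by rewrite /X3 nB // nB //; lra.
    have E1 : @cl R 1 \o X3 = \1_B.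
      apply/funext => o /=; rewrite /X3.
      have [Bo|nBo] := pselect (B o).
        by rewrite !iB //; [rewrite cl_1 //; lra | apply: BC].
      rewrite (nB nBo) add0r; have [Co|nCo] := pselect (C o).
        by rewrite iB // cl_0 //; lra.
      by rewrite nB // cl_0 //; lra.
    have E2 : @cl R 0 \o X3 = \1_C.
      apply/funext => o /=; rewrite /X3.
      have [Bo|nBo] := pselect (B o).
        by rewrite !iB //; [rewrite cl_1 //; lra | apply: BC].
      rewrite (nB nBo) add0r; have [Co|nCo] := pselect (C o).
        by rewrite iB // cl_1 //; lra.
      by rewrite nB // cl_0 //; lra.
    rewrite /vv (ord_eq hX3 (@cl_homo R 1) (@cl_cont R 1) E1).
    rewrite (ord_eq hX3 (@cl_homo R 0) (@cl_cont R 0) E2).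
    by apply: cl_le; [exact: ler01 | exact: lexx].
  - rewrite /vv (_ : \1_set0 = fun _ => 0) ?Rm_cst //.
    by apply/funext => o; rewrite nB.
  - rewrite /vv (_ : \1_setT = fun _ => 1) ?Rm_cst //.
    by apply/funext => o; rewrite iB.
move=> X hX; rewrite /choquet; symmetry; apply: choquet_thr.
- by move=> x h; apply: (key x hX).1.
- by move=> x h; apply: (key x hX).2.
Qed.
End Dir1.

End Main.

Unset Implicit Arguments.
Set Strict Implicit.

Theorem theorem1 (R : realType) (Omega : Type) (A : set (set Omega))
  (Rm : (Omega -> R) -> R) :
  inhabited Omega -> is_algebra A ->
  (ordinality A Rm <->
   exists v : set Omega -> R,
     binary_capacity A v /\
     (forall X : Omega -> R, XA A X -> ((Rm X)%:E = choquet v X)%E)).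
Proof.
move=> _ hA; split.
- move=> hord; exists (vv Rm); exact: (i_ii hA hord).
- move=> [v [hv hR]]; exact: (ii_i hA hv hR).
Qed.
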